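(* For $m\ge1$, $\beta\in\mathbb{R}$ and $x\in(0,1)$ let $$\mathcal{F}_m(x,\beta)=e^{m\pi ix}e^{-2\pi i\beta x}\frac{\sin^m\pi x}{\pi^{m-1}}\frac{d^{m-1}}{dx^{m-1}}\Big((i-\cot\pi x)e^{2\pi i\beta x}\Big).$$ Then $\mathcal{F}_m(x,\beta)=F_m(e^{i\pi x},\beta)$, where $F_m(u,\beta)$ are the polynomials in $u$ defined by $F_1(u,\beta)=-1$ and, for $m\ge2$, $$F_m(u,\beta)=\big(\beta(u^2-1)-(m-1)u^2\big)F_{m-1}(u,\beta)+\frac{u(u^2-1)}{2}\frac{\partial}{\partial u}F_{m-1}(u,\beta).$$ *)

(* Defs.v *)
From HB Require Import structures.
From mathcomp Require Import all_boot all_order all_algebra.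
From mathcomp Require Import all_classical all_reals all_analysis.
From mathcomp Require Import complex.
Set Implicit Arguments. Unset Strict Implicit. Unset Printing Implicit Defensive.
Import Order.TTheory GRing.Theory Num.Theory.
Import numFieldNormedType.Exports.
Local Open Scope ring_scope.
Local Open Scope complex_scope.

Section Defs.
Variable R : realType.

Definition cexpi (t : R) : R[i] := (cos t) +i* (sin t).

Definition cot (t : R) : R := cos t / sin t.

Definition cderive_n (n : nat) (f : R -> R[i]) (x : R) : R[i] :=
  (derive1n n (fun t => complex.Re (f t)) x) +i* (derive1n n (fun t => complex.Im (f t)) x).

Definition calF (m : nat) (x beta : R) : R[i] :=
  cexpi (m%:R * pi * x) * cexpi (- (2 * pi * beta * x))
  * ((sin (pi * x)) ^+ m / pi ^+ m.-1)%:C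
  * cderive_n m.-1
      (fun t => ('i - (cot (pi * t))%:C) * cexpi (2 * pi * beta * t)) x.

(* Fpoly beta n = F_{n+1}(u, beta) as a polynomial in u:
   F_1 = -1,
   F_m = (beta (u^2-1) - (m-1) u^2) F_{m-1} + u (u^2-1)/2 * dF_{m-1}/du. *)
Fixpoint Fpoly (beta : R) (n : nat) : {poly R[i]} :=
  match n with
  | 0 => - 1
  | n'.+1 =>
      (beta%:C *: ('X ^+ 2 - 1) - (n'.+1)%:R *: 'X ^+ 2) * Fpoly beta n'
      + ('X * ('X ^+ 2 - 1)) * ((2%:R : R[i])^-1 *: (Fpoly beta n')^`())
  end.

Definition Fm (m : nat) (beta : R) : {poly R[i]} := Fpoly beta m.-1.

End Defs.

(* Main.v *)
Require Import Defs.
From HB Require Import structures.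
From mathcomp Require Import all_boot all_order all_algebra.
From mathcomp Require Import all_classical all_reals all_analysis.
From mathcomp Require Import complex.
From mathcomp Require Import ring lra.
Import Order.TTheory GRing.Theory Num.Theory.
Import numFieldNormedType.Exports.
Local Open Scope ring_scope.
Local Open Scope complex_scope.

Section S.
Variable R : realType.
Implicit Types (x : R) (f g : R -> R[i]).

Lemma ReM (a b : R[i]) : complex.Re (a * b) = complex.Re a * complex.Re b - complex.Im a * complex.Im b.
Proof. by case: a => a1 a2; case: b => b1 b2. Qed.
Lemma ImM (a b : R[i]) : complex.Im (a * b) = complex.Re a * complex.Im b + complex.Im a * complex.Re b.
Proof. by case: a => a1 a2; case: b => b1 b2. Qed.
Lemma ReD (a b : R[i]) : complex.Re (a + b) = complex.Re a + complex.Re b.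
Proof. by case: a => ? ?; case: b => ? ?. Qed.
Lemma ImD (a b : R[i]) : complex.Im (a + b) = complex.Im a + complex.Im b.
Proof. by case: a => ? ?; case: b => ? ?. Qed.
Lemma ReC (a : R) : complex.Re a%:C = a. Proof. by []. Qed.
Lemma ImC (a : R) : complex.Im a%:C = 0. Proof. by []. Qed.
Lemma Rei : complex.Re ('i : R[i]) = 0. Proof. by []. Qed.
Lemma Imi : complex.Im ('i : R[i]) = 1. Proof. by []. Qed.
Lemma ceq (a b : R[i]) : complex.Re a = complex.Re b -> complex.Im a = complex.Im b -> a = b.
Proof. by case: a => ? ?; case: b => ? ? /= -> ->. Qed.

Definition cder f x (d : R[i]) :=
  is_derive x 1 (fun t => complex.Re (f t)) (complex.Re d) /\ is_derive x 1 (fun t => complex.Im (f t)) (complex.Im d).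

Lemma cderD {f g x a b} : cder f x a -> cder g x b -> cder (fun t => f t + g t) x (a + b).
Proof.
move=> [fa fb] [ga gb]; split.
  have -> : (fun t => complex.Re (f t + g t)) = (fun t => complex.Re (f t)) + (fun t => complex.Re (g t)).
    by apply/funext => t; rewrite ReD.
  by rewrite ReD; apply: is_deriveD.
have -> : (fun t => complex.Im (f t + g t)) = (fun t => complex.Im (f t)) + (fun t => complex.Im (g t)).
  by apply/funext => t; rewrite ImD.
by rewrite ImD; apply: is_deriveD.
Qed.

Lemma cderM {f g x a b} : cder f x a -> cder g x b ->
  cder (fun t => f t * g t) x (f x * b + a * g x).
Proof.
move=> [fa fb] [ga gb]; split.
  have -> : (fun t => complex.Re (f t * g t)) = (fun t => complex.Re (f t)) * (fun t => complex.Re (g t))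
     - (fun t => complex.Im (f t)) * (fun t => complex.Im (g t)).
    by apply/funext => t; rewrite ReM.
  have H := is_deriveB (is_deriveM fa ga) (is_deriveM fb gb).
  apply: (is_derive_eq H).
  rewrite ReD !ReM /=. rewrite /GRing.scale /=. ring.
have -> : (fun t => complex.Im (f t * g t)) = (fun t => complex.Re (f t)) * (fun t => complex.Im (g t))
     + (fun t => complex.Im (f t)) * (fun t => complex.Re (g t)).
  by apply/funext => t; rewrite ImM.
have H := is_deriveD (is_deriveM fa gb) (is_deriveM fb ga).
apply: (is_derive_eq H).
rewrite ImD !ImM /=. rewrite /GRing.scale /=. ring.
Qed.

Lemma cder_cst (c : R[i]) x : cder (fun _ => c) x 0.
Proof. split; exact: is_derive_cst. Qed.

Lemma cder_real (h : R -> R) x d : is_derive x 1 h d -> cder (fun t => (h t)%:C) x d%:C.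
Proof. by move=> hd; split => //=; exact: is_derive_cst. Qed.

Lemma is_derive_lin (k x : R) : is_derive x 1 (fun t : R => k * t) k.
Proof.
have H := is_deriveZ k (is_derive_id x 1).
have -> : (fun t : R => k * t) = k \*: id by apply/funext.
by apply: (is_derive_eq H); rewrite /GRing.scale /= mulr1.
Qed.

Lemma cder_cexpi (k x : R) : cder (fun t => cexpi (k * t)) x ('i * k%:C * cexpi (k * x)).
Proof.
split => /=.
  have H := is_derive1_comp (is_derive_cos (k * x)) (is_derive_lin k x).
  change (is_derive x 1 (cos \o (fun t => k * t)) (complex.Re ('i * k%:C * cexpi (k * x)))).
  apply: (is_derive_eq H); rewrite !ReM /=; ring.
have H := is_derive1_comp (is_derive_sin (k * x)) (is_derive_lin k x).
change (is_derive x 1 (sin \o (fun t => k * t)) (complex.Im ('i * k%:C * cexpi (k * x)))).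
apply: (is_derive_eq H); rewrite !ImM !ReM /=; ring.
Qed.

Lemma cder_poly (p : {poly R[i]}) {f x a} : cder f x a ->
  cder (fun t => p.[f t]) x (p^`().[f x] * a).
Proof.
move=> fa; elim/poly_ind: p => [|p c IH].
  have -> : (fun t => (0 : {poly R[i]}).[f t]) = fun _ => 0.
    by apply/funext => t; rewrite horner0.
  by rewrite deriv0 horner0 mul0r; exact: cder_cst.
have -> : (fun t => (p * 'X + c%:P).[f t]) = fun t => p.[f t] * f t + c.
  by apply/funext => t; rewrite hornerMXaddC.
rewrite derivMXaddC.
have := cderD (cderM IH fa) (cder_cst c x).
by rewrite hornerD hornerMX addr0 => H; congr (cder _ _ _): H; ring.
Qed.

Lemma cder_near f g x d : (\near x, f x = g x) -> cder f x d -> cder g x d.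
Proof.
move=> fg [h1 h2]; split.
  by apply: (near_eq_is_derive _ h1); near do rewrite (near fg _) //.
by apply: (near_eq_is_derive _ h2); near do rewrite (near fg _) //.
Unshelve. all: by end_near. Qed.


Lemma cder_pow {f x a} n : cder f x a -> cder (fun t => f t ^+ n) x (n%:R * f x ^+ n.-1 * a).
Proof.
move=> fa; have := cder_poly ('X^n) fa.
have -> : (fun t => ('X^n : {poly R[i]}).[f t]) = fun t => f t ^+ n.
  by apply/funext => t; rewrite hornerXn.
by rewrite derivXn hornerMn hornerXn mulr_natl.
Qed.

Definition W (t : R) : R[i] := (cot (pi * t))%:C - 'i.
Definition U (t : R) : R[i] := cexpi (pi * t).

Lemma sin_neq0 {t : R} : 0 < t < 1 -> sin (pi * t) != 0.
Proof.
move=> /andP[t0 t1]; apply: lt0r_neq0; apply: sin_gt0_pi; apply/andP; split.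
  by rewrite mulr_gt0 ?pi_gt0.
by rewrite -[X in _ < X]mulr1 ltr_pM2l ?pi_gt0.
Qed.

Lemma is_derive_cot {y : R} : sin y != 0 ->
  is_derive y 1 (@cot R) (- (cos y / sin y) ^+ 2 - 1).
Proof.
move=> s0.
have H := is_deriveM (is_derive_cos y) (is_deriveV s0 (is_derive_sin y)).
have -> : (@cot R) = cos * (fun y => (sin y)^-1) by apply/funext.
apply: (is_derive_eq H); rewrite /GRing.scale /=.
field; exact: s0.
Qed.

Lemma cderW {t : R} : sin (pi * t) != 0 ->
  cder W t (- pi%:C * W t * (W t + 2%:R * 'i)).
Proof.
move=> s0; split.
  have H := is_derive1_comp (is_derive_cot s0) (is_derive_lin pi t).
  have -> : (fun s => complex.Re (W s)) = (@cot R) \o (fun s => pi * s).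
    by apply/funext => s; rewrite /W /= oppr0 addr0.
  apply: (is_derive_eq H).
  rewrite /W !ReM !ImM !ReD !ImD /= /cot. field. exact: s0.
have -> : (fun s => complex.Im (W s)) = cst (-1).
  by apply/funext => s; rewrite /W /= add0r.
apply: (is_derive_eq (is_derive_cst (-1 : R) t 1)).
rewrite /W !ImM !ReD !ImD /= /cot; ring.
Qed.

Lemma WU {t : R} : sin (pi * t) != 0 -> W t * (U t ^+ 2 - 1) = 2%:R * 'i.
Proof.
move=> s0; set y := pi * t.
have h := cos2Dsin2 y.
set c := cot y.
have hc : cos y = c * sin y by rewrite /c /cot divfK.
apply: ceq; rewrite /W /U /cexpi -/y -/c expr2 ?ReM ?ImM ?ReD ?ImD ?ReM ?ImM /= hc.
  move: h; rewrite hc => h.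
  apply/eqP; rewrite -subr_eq0; apply/eqP.
  transitivity (c * ((c * sin y) ^+ 2 + sin y ^+ 2 - 1)); first ring.
  by rewrite h subrr mulr0.
move: h; rewrite hc => h.
apply/eqP; rewrite -subr_eq0; apply/eqP.
transitivity ((c * sin y) ^+ 2 + sin y ^+ 2 - 1); first ring.
by rewrite h subrr.
Qed.


Lemma cder_eqv {f x a} b : cder f x a -> a = b -> cder f x b.
Proof. by move=> ? <-. Qed.

Definition E (beta t : R) : R[i] := cexpi (2 * pi * beta * t).
Definition H (beta : R) (n : nat) (t : R) : R[i] :=
  (pi ^+ n)%:C * E beta t * W t ^+ n.+1 * (Fpoly beta n).[U t].

Lemma cderH beta n t : sin (pi * t) != 0 -> cder (H beta n) t (H beta n.+1 t).
Proof.
move=> s0.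
have dE := cder_cexpi (2 * pi * beta) t.
have dW := cder_pow n.+1 (cderW s0).
have dP := cder_poly (Fpoly beta n) (cder_cexpi pi t).
have D : cder (H beta n) t _ := cderM (cderM (cderM (cder_cst (pi ^+ n)%:C t) dE) dW) dP.
apply: (cder_eqv _ D).
have key := WU s0.
rewrite /H [Fpoly _ n.+1]/= -/(U t) -/(E beta t).
rewrite hornerD !hornerM ?hornerZ !hornerD ?hornerN ?hornerZ ?hornerX ?hornerXn ?hornerC ?horner1.
rewrite ?hornerD ?hornerN ?hornerXn ?horner1 ?hornerC.
set w := W t in key *; set u := U t in key *; set e := E beta t.
set p := (Fpoly beta n).[u]; set p' := (Fpoly beta n)^`().[u].
rewrite !rmorphXn !rmorphM /= !rmorph_nat.
set P := pi%:C; set B := beta%:C.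
have h2 : (2 : R[i]) != 0 by rewrite pnatr_eq0.
set q := (2^-1 : R[i]).
have hq : 2 * q = 1 by rewrite /q mulfV.
clearbody w u e p p' P B q.
rewrite [RHS](_ : _ = P ^+ n.+1 * e * w ^+ n.+1 * (B * (w * (u ^+ 2 - 1)) * p
   - n.+1%:R * (w * (u ^+ 2 - 1) + w) * p + u * (w * (u ^+ 2 - 1)) * (q * p'))); last by rewrite !exprSr; ring.
rewrite key (_ : u * (2 * 'i) * (q * p') = u * 'i * p' * (2 * q)); last by ring.
rewrite hq mulr1 !exprSr /=; ring.
Qed.


Definition g (beta : R) := (fun t : R => ('i - (cot (pi * t))%:C) * cexpi (2 * pi * beta * t)).

Lemma g_H0 beta t : g beta t = H beta 0 t.
Proof.
rewrite /g /H /W /E /= expr0 expr1 hornerN hornerC /=.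
rewrite (_ : (1 : R)%:C = 1) //; ring.
Qed.

Lemma derive_g beta n t : 0 < t < 1 ->
  derive1n n (fun s => complex.Re (g beta s)) t = complex.Re (H beta n t) /\
  derive1n n (fun s => complex.Im (g beta s)) t = complex.Im (H beta n t).
Proof.
elim: n t => [|n IH] t t01.
  by split; [change (complex.Re (g beta t) = complex.Re (H beta 0 t))
            |change (complex.Im (g beta t) = complex.Im (H beta 0 t))]; rewrite g_H0.
have tin : t \in `](0:R), 1[ by rewrite in_itv.
have nt := near_in_itvoo tin.
have [d1 d2] := cderH beta n t (sin_neq0 t01).
split.
- rewrite [LHS]/derive1n iterS -/(derive1n n _) derive1E.
  rewrite (near_eq_derive (g := fun s => complex.Re (H beta n s))).
    by case: d1.
  by apply: filterS nt => s; rewrite in_itv /= => /IH[].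
- rewrite [LHS]/derive1n iterS -/(derive1n n _) derive1E.
  rewrite (near_eq_derive (g := fun s => complex.Im (H beta n s))).
    by case: d2.
  by apply: filterS nt => s; rewrite in_itv /= => /IH[].
Qed.


Lemma cexpiD (a b : R) : cexpi (a + b) = cexpi a * cexpi b.
Proof. by apply: ceq; rewrite /cexpi ?ReM ?ImM /= ?cosD ?sinD; ring. Qed.

Lemma cexpi0 : cexpi (0 : R) = 1.
Proof. by rewrite /cexpi cos0 sin0. Qed.

Lemma cexpiN (a : R) : cexpi (- a) * cexpi a = 1.
Proof. by rewrite -cexpiD addNr cexpi0. Qed.

Lemma cexpi_nat (k : nat) (a : R) : cexpi (k%:R * a) = cexpi a ^+ k.
Proof.
elim: k => [|k IH]; first by rewrite mul0r cexpi0 expr0.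
by rewrite -addn1 natrD mulrDl mul1r cexpiD IH exprD expr1.
Qed.

Lemma UsW (t : R) : sin (pi * t) != 0 -> U t * (sin (pi * t))%:C * W t = 1.
Proof.
move=> s0; set y := pi * t.
have h := cos2Dsin2 y.
set c := cot y.
have hc : cos y = c * sin y by rewrite /c /cot divfK.
move: h; rewrite hc => h.
apply: ceq; rewrite /W /U /cexpi -/y -/c ?ReM ?ImM ?ReD ?ImD ?ReM ?ImM /= hc.
  apply/eqP; rewrite -subr_eq0; apply/eqP.
  transitivity ((c * sin y) ^+ 2 + sin y ^+ 2 - 1); first ring.
  by rewrite h subrr.
ring.
Qed.

End S.

Theorem theorem4p4 (R : realType) (m : nat) (beta x : R) :
  (1 <= m)%N -> 0 < x < 1 ->
  calF m x beta = (Fm m beta).[cexpi (pi * x)].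
Proof.
case: m => // n _ x01.
have s0 := @sin_neq0 R x x01.
have [d1 d2] := @derive_g R beta n x x01.
have hc : cderive_n n (g R beta) x = H R beta n x.
  by rewrite /cderive_n d1 d2; case: (H R beta n x).
rewrite /calF /Fm /= [cderive_n _ _ _]hc /H -/(U R x).
rewrite -[n.+1%:R * pi * x]mulrA (@cexpi_nat R n.+1 (pi * x)) -/(U R x) /E.
set s := sin (pi * x); set P := (Fpoly beta n).[U R x].
have pn : pi ^+ n != 0 :> R by rewrite expf_neq0 // gt_eqF // pi_gt0.
have F3 : (s ^+ n.+1 / pi ^+ n)%:C * (pi ^+ n)%:C = s%:C ^+ n.+1.
  by rewrite -rmorphM /= divfK // rmorphXn.
have F2 := @cexpiN R (2 * pi * beta * x).
have F4 := @UsW R x s0.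
transitivity ((cexpi (- (2 * pi * beta * x)) * cexpi (2 * pi * beta * x)) *
  ((s ^+ n.+1 / pi ^+ n)%:C * (pi ^+ n)%:C) * U R x ^+ n.+1 * W R x ^+ n.+1 * P).
  move: F3 F2 F4.
  set A := (s ^+ n.+1 / pi ^+ n)%:C; set B := (pi ^+ n)%:C => _ _ _; ring.
rewrite F2 F3 mul1r.
transitivity ((U R x * s%:C * W R x) ^+ n.+1 * P); first by rewrite !exprMn; ring.
by rewrite F4 expr1n mul1r.
Qed.
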